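(* Let $u$ be a sufficiently regular function on $\mathcal{K}_{[s_0,s_1]}$, let $0\le k\le p$ and let $Z^K$ be any composition, in any order, of $p-k$ partial derivatives $\partial_\alpha$ and $k$ boosts $L_a$. Then, with a constant $C$ depending only on $p$, for all $\alpha,\beta\in\{0,1,2\}$, $$(s/t)^2|\partial_\alpha\partial_\beta Z^Ku|\le C|\Box u|_{p,k}+Ct^{-1}|\partial u|_{p+1,k+1},$$ and $$(s/t)^2|\partial\partial u|_{p,k}\le C|\Box u|_{p,k}+Ct^{-1}|\partial u|_{p+1,k+1}.$$
   Context: Coordinates $(t,x)$, $r=|x|$, $s=\sqrt{t^2-r^2}$, $\Box=\partial_t^2-\partial_1^2-\partial_2^2$, $\partial_0=\partial_t$, $L_a=x^a\partial_t+t\partial_a$ ($a=1,2$). $\mathcal{K}_{[s_0,s_1]}=\{(t,x): t>r+1,\ s_0^2\le t^2-r^2\le s_1^2\}$. For a function $w$: $|w|_{p,k}:=\max|Z^Kw|$ over all compositions $Z^K$, in any order, of $i$ partial derivatives and $j$ boosts with $i+j\le p$, $j\le k$; $|\partial w|_{p,k}:=\max_\alpha|\partial_\alpha w|_{p,k}$; $|\partial\partial w|_{p,k}:=\max_{\alpha,\beta}|\partial_\alpha\partial_\beta w|_{p,k}$. *)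

(* Defs.v *)
From Stdlib Require Import Reals Lra List.
From Coquelicot Require Import Coquelicot.
Open Scope R_scope.

(* Functions on R^{1+2} are curried: w t x1 x2. *)
Definition fn3 := R -> R -> R -> R.

Inductive dir := Dt | Dx1 | Dx2.
Inductive bdir := B1 | B2.
Inductive vf := Pd (a : dir) | Bst (a : bdir).

Definition pd (a : dir) (w : fn3) : fn3 :=
  match a with
  | Dt  => fun t x y => Derive (fun s => w s x y) t
  | Dx1 => fun t x y => Derive (fun s => w t s y) x
  | Dx2 => fun t x y => Derive (fun s => w t x s) y
  end.

Definition boost (a : bdir) (w : fn3) : fn3 :=
  match a with
  | B1 => fun t x y => x * pd Dt w t x y + t * pd Dx1 w t x y
  | B2 => fun t x y => y * pd Dt w t x y + t * pd Dx2 w t x y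
  end.

Definition apply_vf (z : vf) (w : fn3) : fn3 :=
  match z with Pd a => pd a w | Bst a => boost a w end.

Definition applyZ (K : list vf) (w : fn3) : fn3 := fold_right apply_vf w K.

Definition is_boost (z : vf) : bool := match z with Bst _ => true | _ => false end.
Definition nboost (K : list vf) : nat := length (filter is_boost K).
Definition nder (K : list vf) : nat := length (filter (fun z => negb (is_boost z)) K).

Definition all_vf : list vf := Pd Dt :: Pd Dx1 :: Pd Dx2 :: Bst B1 :: Bst B2 :: nil.
Definition all_dir : list dir := Dt :: Dx1 :: Dx2 :: nil.

Fixpoint words (n : nat) : list (list vf) :=
  match n with
  | O => nil :: nil
  | S m => flat_map (fun K => map (fun z => z :: K) all_vf) (words m)
  end.

Definition admissible (p k : nat) : list (list vf) :=
  filter (fun K => Nat.leb (nboost K) k) (flat_map words (seq 0 (S p))).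

Definition maxR (l : list R) : R := fold_right Rmax 0 l.

Definition norm_pk (p k : nat) (w : fn3) (t x y : R) : R :=
  maxR (map (fun K => Rabs (applyZ K w t x y)) (admissible p k)).

Definition norm_d_pk (p k : nat) (w : fn3) (t x y : R) : R :=
  maxR (map (fun a => norm_pk p k (pd a w) t x y) all_dir).

Definition norm_dd_pk (p k : nat) (w : fn3) (t x y : R) : R :=
  maxR (flat_map (fun a => map (fun b => norm_pk p k (pd a (pd b w)) t x y) all_dir)
                 all_dir).

Definition box (w : fn3) : fn3 :=
  fun t x y => pd Dt (pd Dt w) t x y - pd Dx1 (pd Dx1 w) t x y - pd Dx2 (pd Dx2 w) t x y.

Definition rad (x y : R) : R := sqrt (x ^ 2 + y ^ 2).
Definition hyp_s (t x y : R) : R := sqrt (t ^ 2 - x ^ 2 - y ^ 2).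

Definition inK (s0 s1 t x y : R) : Prop :=
  t > rad x y + 1 /\ s0 ^ 2 <= t ^ 2 - rad x y ^ 2 <= s1 ^ 2.

Definition dist3 (t x y t' x' y' : R) : R :=
  Rmax (Rabs (t - t')) (Rmax (Rabs (x - x')) (Rabs (y - y'))).

Definition open3 (U : R -> R -> R -> Prop) : Prop :=
  forall t x y, U t x y -> exists d, 0 < d /\
    forall t' x' y', dist3 t x y t' x' y' < d -> U t' x' y'.

Definition continuous_on3 (U : R -> R -> R -> Prop) (w : fn3) : Prop :=
  forall t x y, U t x y -> forall eps, 0 < eps -> exists d, 0 < d /\
    forall t' x' y', dist3 t x y t' x' y' < d -> Rabs (w t' x' y' - w t x y) < eps.

Definition iter_pd (ds : list dir) (w : fn3) : fn3 := fold_right pd w ds.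

Definition smooth_on (U : R -> R -> R -> Prop) (w : fn3) : Prop :=
  forall ds : list dir,
    continuous_on3 U (iter_pd ds w) /\
    (forall t x y, U t x y ->
       ex_derive (fun s => iter_pd ds w s x y) t /\
       ex_derive (fun s => iter_pd ds w t s y) x /\
       ex_derive (fun s => iter_pd ds w t x s) y).

(* Main.v *)
Require Import Defs.
From Stdlib Require Import Reals List.
From Coquelicot Require Import Coquelicot.
From Stdlib Require Import Lra Lia FunctionalExtensionality.
Open Scope R_scope.


Definition EqU (U : R -> R -> R -> Prop) (f g : fn3) : Prop :=
  forall t x y, U t x y -> f t x y = g t x y.

Definition exd (a : dir) (w : fn3) (t x y : R) : Prop :=
  match a with
  | Dt => ex_derive (fun s => w s x y) t
  | Dx1 => ex_derive (fun s => w t s y) x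
  | Dx2 => ex_derive (fun s => w t x s) y
  end.

Definition D1 (U : R -> R -> R -> Prop) (w : fn3) : Prop := forall t x y, U t x y -> forall a, exd a w t x y.
Definition Sym (U : R -> R -> R -> Prop) (w : fn3) : Prop :=
  forall t x y, U t x y -> forall a b, pd a (pd b w) t x y = pd b (pd a w) t x y.
Definition T0 (U : R -> R -> R -> Prop) w : Prop := D1 U w /\ (forall b, D1 U (pd b w)) /\ Sym U w.
Fixpoint T (U : R -> R -> R -> Prop) (n : nat) (w : fn3) : Prop :=
  match n with O => T0 U w | S m => T0 U w /\ forall a, T U m (pd a w) end.
Definition Sm (U : R -> R -> R -> Prop) w : Prop := forall n, T U n w.

Lemma locally_of (P : R -> Prop) x d : 0 < d -> (forall s, Rabs (s - x) < d -> P s) -> locally x P.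
Proof. intros H H0. exists (mkposreal d H). intros s Hs. apply H0. exact Hs. Qed.

Lemma open_ball U t x y : open3 U -> U t x y -> exists d, 0 < d /\
  forall t' x' y', Rabs (t' - t) < d -> Rabs (x' - x) < d -> Rabs (y' - y) < d -> U t' x' y'.
Proof.
  intros HU H. destruct (HU t x y H) as [d [Hd Hb]]. exists d; split; auto.
  intros t' x' y' h1 h2 h3. apply Hb. unfold dist3.
  rewrite (Rabs_minus_sym t), (Rabs_minus_sym x), (Rabs_minus_sym y).
  apply Rmax_lub_lt; auto. apply Rmax_lub_lt; auto.
Qed.

Lemma pd_loc U a f g : open3 U -> EqU U f g -> EqU U (pd a f) (pd a g).
Proof.
  intros HU H t x y Hp. destruct (open_ball U t x y HU Hp) as [d [Hd Hb]].
  destruct a; simpl; apply Derive_ext_loc; apply (locally_of _ _ d Hd); intros s Hs;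
  apply H; apply Hb; try rewrite Rminus_eq_0, Rabs_R0; auto.
Qed.

Lemma exd_loc U a f g t x y : open3 U -> EqU U f g -> U t x y -> exd a f t x y -> exd a g t x y.
Proof.
  intros HU H Hp. destruct (open_ball U t x y HU Hp) as [d [Hd Hb]].
  destruct a; simpl; apply ex_derive_ext_loc; apply (locally_of _ _ d Hd); intros s Hs;
  apply H; apply Hb; try rewrite Rminus_eq_0, Rabs_R0; auto.
Qed.

Lemma D1_loc U f g : open3 U -> EqU U f g -> D1 U f -> D1 U g.
Proof. intros HU H H1 t x y Hp a. apply (exd_loc U a f g); auto. Qed.

Lemma Sym_loc U f g : open3 U -> EqU U f g -> Sym U f -> Sym U g.
Proof.
  intros HU H H1 t x y Hp a b.
  rewrite <- (pd_loc U a _ _ HU (pd_loc U b _ _ HU H)) by auto.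
  rewrite <- (pd_loc U b _ _ HU (pd_loc U a _ _ HU H)) by auto.
  auto.
Qed.

Lemma T0_loc U f g : open3 U -> EqU U f g -> T0 U f -> T0 U g.
Proof.
  intros HU H [h1 [h2 h3]]. split; [|split].
  - eapply D1_loc; eauto.
  - intro b. apply (D1_loc U (pd b f)); auto. apply pd_loc; auto.
  - eapply Sym_loc; eauto.
Qed.

Lemma T_loc U n : open3 U -> forall f g, EqU U f g -> T U n f -> T U n g.
Proof.
  intros HU; induction n; simpl; intros f g H Hf.
  - eapply T0_loc; eauto.
  - destruct Hf as [h1 h2]. split. eapply T0_loc; eauto.
    intro a. apply (IHn (pd a f)); auto. apply pd_loc; auto.
Qed.

Lemma Sm_loc U f g : open3 U -> EqU U f g -> Sm U f -> Sm U g.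
Proof. intros HU H Hf n. eapply T_loc; eauto. Qed.

Lemma T_S U n w : T U (S n) w -> T U n w.
Proof.
  revert w; induction n; simpl; intros w [h1 h2]; auto.
  split; auto. intro a. apply IHn. apply h2.
Qed.

Lemma T_T0 U n w : T U n w -> T0 U w.
Proof. destruct n; simpl; tauto. Qed.

Lemma Sm_pd U a w : Sm U w -> Sm U (pd a w).
Proof. intros H n. specialize (H (S n)). simpl in H. apply H. Qed.

Lemma Sm_T0 U w : Sm U w -> T0 U w.
Proof. intros H. apply (T_T0 U 0). apply H. Qed.


Definition plus3 (f g : fn3) : fn3 := fun t x y => f t x y + g t x y.
Definition scal3 (c : R) (f : fn3) : fn3 := fun t x y => c * f t x y.
Definition mul3 (f g : fn3) : fn3 := fun t x y => f t x y * g t x y.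
Definition cst3 (c : R) : fn3 := fun _ _ _ => c.

Lemma exd_plus a f g t x y : exd a f t x y -> exd a g t x y -> exd a (plus3 f g) t x y.
Proof. destruct a; simpl; intros; apply (ex_derive_plus _ _ _ H H0). Qed.
Lemma exd_scal a c f t x y : exd a f t x y -> exd a (scal3 c f) t x y.
Proof. destruct a; simpl; intros; apply (ex_derive_scal _ _ _ H). Qed.
Lemma exd_mul a f g t x y : exd a f t x y -> exd a g t x y -> exd a (mul3 f g) t x y.
Proof. destruct a; simpl; intros; apply (ex_derive_mult _ _ _ H H0). Qed.

Lemma D1_plus U f g : D1 U f -> D1 U g -> D1 U (plus3 f g).
Proof. intros h1 h2 t x y Hp a. apply exd_plus; auto. Qed.
Lemma D1_scal U c f : D1 U f -> D1 U (scal3 c f).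
Proof. intros h1 t x y Hp a. apply exd_scal; auto. Qed.
Lemma D1_mul U f g : D1 U f -> D1 U g -> D1 U (mul3 f g).
Proof. intros h1 h2 t x y Hp a. apply exd_mul; auto. Qed.

Lemma pd_plus U a f g : D1 U f -> D1 U g -> EqU U (pd a (plus3 f g)) (plus3 (pd a f) (pd a g)).
Proof.
  intros h1 h2 t x y Hp. specialize (h1 t x y Hp a). specialize (h2 t x y Hp a).
  destruct a; simpl in *; apply (Derive_plus _ _ _ h1 h2).
Qed.
Lemma pd_scal a c f : pd a (scal3 c f) = scal3 c (pd a f).
Proof.
  apply functional_extensionality; intro t; apply functional_extensionality; intro x;
  apply functional_extensionality; intro y. destruct a; apply Derive_scal.
Qed.
Lemma pd_mul U a f g : D1 U f -> D1 U g ->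
  EqU U (pd a (mul3 f g)) (plus3 (mul3 (pd a f) g) (mul3 f (pd a g))).
Proof.
  intros h1 h2 t x y Hp. specialize (h1 t x y Hp a). specialize (h2 t x y Hp a).
  destruct a; simpl in *; apply (Derive_mult _ _ _ h1 h2).
Qed.

Lemma EqU_sym U f g : EqU U f g -> EqU U g f.
Proof. intros H t x y Hp; symmetry; auto. Qed.

Lemma T0_plus U f g : open3 U -> T0 U f -> T0 U g -> T0 U (plus3 f g).
Proof.
  intros HU [f1 [f2 f3]] [g1 [g2 g3]]. split; [|split].
  - apply D1_plus; auto.
  - intro b. apply (D1_loc U (plus3 (pd b f) (pd b g))); auto.
    apply EqU_sym, pd_plus; auto. apply D1_plus; auto.
  - intros t x y Hp a b.
    rewrite (pd_loc U a _ _ HU (pd_plus U b f g f1 g1)) by auto.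
    rewrite (pd_loc U b _ _ HU (pd_plus U a f g f1 g1)) by auto.
    rewrite (pd_plus U a) by auto. rewrite (pd_plus U b) by auto.
    unfold plus3. rewrite f3, g3 by auto. reflexivity.
Qed.

Lemma T_plus U n : open3 U -> forall f g, T U n f -> T U n g -> T U n (plus3 f g).
Proof.
  intro HU; induction n; simpl; intros f g hf hg.
  - apply T0_plus; auto.
  - destruct hf as [f0 f1]; destruct hg as [g0 g1]. split. apply T0_plus; auto.
    intro a. apply (T_loc U n HU (plus3 (pd a f) (pd a g))).
    apply EqU_sym, pd_plus. apply (proj1 f0). apply (proj1 g0). apply IHn; [apply f1|apply g1].
Qed.

Lemma T_scal U n : forall c f, T U n f -> T U n (scal3 c f).
Proof.
  induction n; simpl; intros c f hf.
  - destruct hf as [f1 [f2 f3]]. split; [|split].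
    + apply D1_scal; auto.
    + intro b. rewrite pd_scal. apply D1_scal; auto.
    + intros t x y Hp a b. rewrite !pd_scal. unfold scal3. rewrite f3; auto.
  - destruct hf as [f0 f1]. split.
    + destruct f0 as [f0 [f2 f3]]. split; [|split].
      * apply D1_scal; auto.
      * intro b. rewrite pd_scal. apply D1_scal; auto.
      * intros t x y Hp a b. rewrite !pd_scal. unfold scal3. rewrite f3; auto.
    + intro a. rewrite pd_scal. apply IHn; auto.
Qed.

Lemma T0_mul U f g : open3 U -> T0 U f -> T0 U g -> T0 U (mul3 f g).
Proof.
  intros HU [f1 [f2 f3]] [g1 [g2 g3]]. split; [|split].
  - apply D1_mul; auto.
  - intro b. apply (D1_loc U (plus3 (mul3 (pd b f) g) (mul3 f (pd b g)))); auto.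
    apply EqU_sym, pd_mul; auto. apply D1_plus; apply D1_mul; auto.
  - intros t x y Hp a b.
    rewrite (pd_loc U a _ _ HU (pd_mul U b f g f1 g1)) by auto.
    rewrite (pd_loc U b _ _ HU (pd_mul U a f g f1 g1)) by auto.
    rewrite (pd_plus U a) by first [exact Hp | apply D1_mul; auto].
    rewrite (pd_plus U b) by first [exact Hp | apply D1_mul; auto].
    unfold plus3. rewrite !(pd_mul U a) by auto. rewrite !(pd_mul U b) by auto.
    unfold plus3, mul3. rewrite f3, g3 by auto. ring.
Qed.

Lemma T_mul U n : open3 U -> forall f g, T U n f -> T U n g -> T U n (mul3 f g).
Proof.
  intro HU; induction n; simpl; intros f g hf hg.
  - apply T0_mul; auto.
  - destruct hf as [f0 f1]; destruct hg as [g0 g1]. split. apply T0_mul; auto.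
    intro a. apply (T_loc U n HU (plus3 (mul3 (pd a f) g) (mul3 f (pd a g)))).
    apply EqU_sym, pd_mul. apply (proj1 f0). apply (proj1 g0).
    apply T_plus; auto; apply IHn.
    apply f1. apply (T_S U n); simpl; split; [exact g0|exact g1].
    apply (T_S U n); simpl; split; [exact f0|exact f1]. apply g1.
Qed.

Lemma pd_cst a c : pd a (cst3 c) = cst3 0.
Proof.
  apply functional_extensionality; intro t; apply functional_extensionality; intro x;
  apply functional_extensionality; intro y. destruct a; simpl; unfold cst3; apply Derive_const.
Qed.

Lemma T0_cst U c : T0 U (cst3 c).
Proof.
  split; [|split].
  - intros t x y _ a; destruct a; simpl; unfold cst3; apply ex_derive_const.
  - intros b. rewrite pd_cst. intros t x y _ a; destruct a; simpl; unfold cst3; apply ex_derive_const.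
  - intros t x y _ a b. rewrite !pd_cst. reflexivity.
Qed.

Lemma T_cst U n : forall c, T U n (cst3 c).
Proof.
  induction n; simpl; intros c. apply T0_cst. split. apply T0_cst.
  intro a; rewrite pd_cst; auto.
Qed.

Definition crd (a : dir) : fn3 :=
  match a with Dt => fun t _ _ => t | Dx1 => fun _ x _ => x | Dx2 => fun _ _ y => y end.

Lemma pd_crd a b : pd a (crd b) = cst3 (if (match a, b with Dt, Dt | Dx1, Dx1 | Dx2, Dx2 => true | _, _ => false end) then 1 else 0).
Proof.
  apply functional_extensionality; intro t; apply functional_extensionality; intro x;
  apply functional_extensionality; intro y.
  destruct a, b; simpl; unfold cst3; try apply Derive_const; apply Derive_id.
Qed.

Lemma T_crd U n b : T U n (crd b).
Proof.
  assert (H0 : T0 U (crd b)).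
  { split; [|split].
    - intros t x y _ a; destruct a, b; simpl; try apply ex_derive_const; apply ex_derive_id.
    - intros c. rewrite pd_crd. apply (proj1 (T0_cst U _)).
    - intros t x y _ a c. rewrite !pd_crd, !pd_cst. reflexivity. }
  destruct n; simpl; auto. split; auto. intro a. rewrite pd_crd. apply T_cst.
Qed.

Lemma Sm_plus U f g : open3 U -> Sm U f -> Sm U g -> Sm U (plus3 f g).
Proof. intros HU h1 h2 n. apply T_plus; auto. Qed.
Lemma Sm_scal U c f : Sm U f -> Sm U (scal3 c f).
Proof. intros h1 n. apply T_scal; auto. Qed.
Lemma Sm_mul U f g : open3 U -> Sm U f -> Sm U g -> Sm U (mul3 f g).
Proof. intros HU h1 h2 n. apply T_mul; auto. Qed.
Lemma Sm_crd U b : Sm U (crd b).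
Proof. intros n; apply T_crd. Qed.

Lemma boost_eq a w : boost a w =
  match a with
  | Defs.B1 => plus3 (mul3 (crd Dx1) (pd Dt w)) (mul3 (crd Dt) (pd Dx1 w))
  | Defs.B2 => plus3 (mul3 (crd Dx2) (pd Dt w)) (mul3 (crd Dt) (pd Dx2 w))
  end.
Proof. destruct a; reflexivity. Qed.

Lemma Sm_boost U a w : open3 U -> Sm U w -> Sm U (boost a w).
Proof.
  intros HU h. rewrite boost_eq. destruct a; apply Sm_plus; auto; apply Sm_mul; auto;
  try apply Sm_crd; apply Sm_pd; auto.
Qed.

Lemma Sm_vf U z w : open3 U -> Sm U w -> Sm U (apply_vf z w).
Proof. destruct z; simpl; intros. apply Sm_pd; auto. apply Sm_boost; auto. Qed.

Lemma Sm_applyZ U K w : open3 U -> Sm U w -> Sm U (applyZ K w).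
Proof. induction K; simpl; intros; auto. apply Sm_vf; auto. Qed.


Lemma dist_lt t x y t' x' y' d : Rabs (t' - t) < d -> Rabs (x' - x) < d -> Rabs (y' - y) < d ->
  dist3 t x y t' x' y' < d.
Proof.
  intros. unfold dist3.
  rewrite (Rabs_minus_sym t), (Rabs_minus_sym x), (Rabs_minus_sym y).
  apply Rmax_lub_lt; auto. apply Rmax_lub_lt; auto.
Qed.

Lemma abs0 (v d : R) : 0 < d -> Rabs (v - v) < d.
Proof. intros; rewrite Rminus_eq_0, Rabs_R0; auto. Qed.

Section Sch.
End Sch.

Lemma sch_tx U w ds t x y : open3 U -> smooth_on U w -> U t x y ->
  pd Dt (pd Dx1 (iter_pd ds w)) t x y = pd Dx1 (pd Dt (iter_pd ds w)) t x y.
Proof.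
  intros HU Hs Hp. simpl.
  apply (Schwarz (fun z1 z2 => iter_pd ds w z1 z2 y) t x).
  - destruct (open_ball U t x y HU Hp) as [d [Hd Hb]]. exists (mkposreal d Hd).
    intros u' v' h1 h2. simpl in h1, h2.
    assert (Hp' := Hb u' v' y h1 h2 (abs0 y d Hd)).
    destruct (proj2 (Hs ds) u' v' y Hp') as [e1 [e2 e3]].
    destruct (proj2 (Hs (Dx1 :: ds)) u' v' y Hp') as [f1 [f2 f3]].
    destruct (proj2 (Hs (Dt :: ds)) u' v' y Hp') as [g1 [g2 g3]].
    repeat split; assumption.
  - intros eps. destruct (proj1 (Hs (Dt :: Dx1 :: ds)) t x y Hp eps (cond_pos eps)) as [d [Hd Hc]].
    exists (mkposreal d Hd). intros u' v' h1 h2.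
    exact (Hc u' v' y (dist_lt _ _ _ _ _ _ _ h1 h2 (abs0 y d Hd))).
  - intros eps. destruct (proj1 (Hs (Dx1 :: Dt :: ds)) t x y Hp eps (cond_pos eps)) as [d [Hd Hc]].
    exists (mkposreal d Hd). intros u' v' h1 h2.
    exact (Hc u' v' y (dist_lt _ _ _ _ _ _ _ h1 h2 (abs0 y d Hd))).
Qed.

Lemma sch_ty U w ds t x y : open3 U -> smooth_on U w -> U t x y ->
  pd Dt (pd Dx2 (iter_pd ds w)) t x y = pd Dx2 (pd Dt (iter_pd ds w)) t x y.
Proof.
  intros HU Hs Hp. simpl.
  apply (Schwarz (fun z1 z2 => iter_pd ds w z1 x z2) t y).
  - destruct (open_ball U t x y HU Hp) as [d [Hd Hb]]. exists (mkposreal d Hd).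
    intros u' v' h1 h2. simpl in h1, h2.
    assert (Hp' := Hb u' x v' h1 (abs0 x d Hd) h2).
    destruct (proj2 (Hs ds) u' x v' Hp') as [e1 [e2 e3]].
    destruct (proj2 (Hs (Dx2 :: ds)) u' x v' Hp') as [f1 [f2 f3]].
    destruct (proj2 (Hs (Dt :: ds)) u' x v' Hp') as [g1 [g2 g3]].
    repeat split; assumption.
  - intros eps. destruct (proj1 (Hs (Dt :: Dx2 :: ds)) t x y Hp eps (cond_pos eps)) as [d [Hd Hc]].
    exists (mkposreal d Hd). intros u' v' h1 h2.
    exact (Hc u' x v' (dist_lt _ _ _ _ _ _ _ h1 (abs0 x d Hd) h2)).
  - intros eps. destruct (proj1 (Hs (Dx2 :: Dt :: ds)) t x y Hp eps (cond_pos eps)) as [d [Hd Hc]].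
    exists (mkposreal d Hd). intros u' v' h1 h2.
    exact (Hc u' x v' (dist_lt _ _ _ _ _ _ _ h1 (abs0 x d Hd) h2)).
Qed.

Lemma sch_xy U w ds t x y : open3 U -> smooth_on U w -> U t x y ->
  pd Dx1 (pd Dx2 (iter_pd ds w)) t x y = pd Dx2 (pd Dx1 (iter_pd ds w)) t x y.
Proof.
  intros HU Hs Hp. simpl.
  apply (Schwarz (fun z1 z2 => iter_pd ds w t z1 z2) x y).
  - destruct (open_ball U t x y HU Hp) as [d [Hd Hb]]. exists (mkposreal d Hd).
    intros u' v' h1 h2. simpl in h1, h2.
    assert (Hp' := Hb t u' v' (abs0 t d Hd) h1 h2).
    destruct (proj2 (Hs ds) t u' v' Hp') as [e1 [e2 e3]].
    destruct (proj2 (Hs (Dx2 :: ds)) t u' v' Hp') as [f1 [f2 f3]].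
    destruct (proj2 (Hs (Dx1 :: ds)) t u' v' Hp') as [g1 [g2 g3]].
    repeat split; assumption.
  - intros eps. destruct (proj1 (Hs (Dx1 :: Dx2 :: ds)) t x y Hp eps (cond_pos eps)) as [d [Hd Hc]].
    exists (mkposreal d Hd). intros u' v' h1 h2.
    exact (Hc t u' v' (dist_lt _ _ _ _ _ _ _ (abs0 t d Hd) h1 h2)).
  - intros eps. destruct (proj1 (Hs (Dx2 :: Dx1 :: ds)) t x y Hp eps (cond_pos eps)) as [d [Hd Hc]].
    exists (mkposreal d Hd). intros u' v' h1 h2.
    exact (Hc t u' v' (dist_lt _ _ _ _ _ _ _ (abs0 t d Hd) h1 h2)).
Qed.

Lemma Sym_smooth U w ds : open3 U -> smooth_on U w -> Sym U (iter_pd ds w).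
Proof.
  intros HU Hs t x y Hp a b.
  destruct a, b.
  reflexivity. apply (sch_tx U); auto. apply (sch_ty U); auto.
  symmetry; apply (sch_tx U); auto. reflexivity. apply (sch_xy U); auto.
  symmetry; apply (sch_ty U); auto. symmetry; apply (sch_xy U); auto. reflexivity.
Qed.

Lemma D1_smooth U w ds : smooth_on U w -> D1 U (iter_pd ds w).
Proof.
  intros Hs t x y Hp a. destruct (proj2 (Hs ds) t x y Hp) as [e1 [e2 e3]].
  destruct a; simpl; assumption.
Qed.

Lemma T_smooth U w n : open3 U -> smooth_on U w -> forall ds, T U n (iter_pd ds w).
Proof.
  intros HU Hs. induction n; intros ds.
  - split; [|split]. apply D1_smooth; auto.
    intro b. apply (D1_smooth U w (b :: ds)); auto. apply Sym_smooth; auto.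
  - split. split; [|split]. apply D1_smooth; auto.
    intro b. apply (D1_smooth U w (b :: ds)); auto. apply Sym_smooth; auto.
    intro a. apply (IHn (a :: ds)).
Qed.

Lemma Sm_smooth U w : open3 U -> smooth_on U w -> Sm U w.
Proof. intros HU Hs n. apply (T_smooth U w n HU Hs nil). Qed.


Definition lc {X : Type} (F : X -> fn3) (l : list (R * X)) : fn3 :=
  fun t x y => fold_right (fun p acc => fst p * F (snd p) t x y + acc) 0 l.
Definition weight {X : Type} (l : list (R * X)) : R :=
  fold_right (fun p acc => Rabs (fst p) + acc) 0 l.

Lemma Derive_fold {X : Type} (G : X -> R -> R) (l : list (R * X)) s0 :
  (forall p, In p l -> ex_derive (G (snd p)) s0) ->
  ex_derive (fun s => fold_right (fun p acc => fst p * G (snd p) s + acc) 0 l) s0 /\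
  Derive (fun s => fold_right (fun p acc => fst p * G (snd p) s + acc) 0 l) s0 =
  fold_right (fun p acc => fst p * Derive (G (snd p)) s0 + acc) 0 l.
Proof.
  induction l as [|p l IH]; simpl; intros H.
  - split. apply ex_derive_const. apply Derive_const.
  - destruct IH as [IH1 IH2]. intros; apply H; auto.
    assert (E : ex_derive (G (snd p)) s0) by (apply H; auto).
    split.
    + apply (ex_derive_plus (fun s => fst p * G (snd p) s)). apply ex_derive_scal; auto. auto.
    + rewrite (Derive_plus (fun s => fst p * G (snd p) s)). rewrite Derive_scal, IH2. reflexivity.
      apply ex_derive_scal; auto. auto.
Qed.

Lemma exd_lc {X : Type} a (F : X -> fn3) l t x y :
  (forall p, In p l -> exd a (F (snd p)) t x y) -> exd a (lc F l) t x y.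
Proof.
  destruct a; simpl; intros H; unfold lc.
  - apply (Derive_fold (fun z s => F z s x y)). exact H.
  - apply (Derive_fold (fun z s => F z t s y)). exact H.
  - apply (Derive_fold (fun z s => F z t x s)). exact H.
Qed.

Lemma pd_lc {X : Type} a (F : X -> fn3) l t x y :
  (forall p, In p l -> exd a (F (snd p)) t x y) ->
  pd a (lc F l) t x y = lc (fun z => pd a (F z)) l t x y.
Proof.
  destruct a; simpl; intros H; unfold lc.
  - apply (Derive_fold (fun z s => F z s x y)). exact H.
  - apply (Derive_fold (fun z s => F z t s y)). exact H.
  - apply (Derive_fold (fun z s => F z t x s)). exact H.
Qed.

Lemma boost_lc {X : Type} a (F : X -> fn3) l t x y :
  (forall p, In p l -> forall b, exd b (F (snd p)) t x y) ->
  boost a (lc F l) t x y = lc (fun z => boost a (F z)) l t x y.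
Proof.
  intros H. destruct a; rewrite boost_eq; unfold plus3, mul3, crd;
  rewrite !pd_lc by (intros; apply H; auto);
  unfold lc; clear H; induction l; simpl in *; try ring; rewrite <- IHl; ring.
Qed.

Lemma lc_ext {X : Type} (F G : X -> fn3) l t x y :
  (forall p, In p l -> F (snd p) t x y = G (snd p) t x y) -> lc F l t x y = lc G l t x y.
Proof.
  unfold lc; induction l; simpl; intros H; auto. rewrite H, IHl; auto.
Qed.

Lemma lc_map {X Y : Type} (F : Y -> fn3) (h : X -> Y) l t x y :
  lc F (map (fun p => (fst p, h (snd p))) l) t x y = lc (fun z => F (h z)) l t x y.
Proof. unfold lc; induction l; simpl; auto. rewrite IHl; auto. Qed.

Lemma weight_map {X Y : Type} (h : X -> Y) (l : list (R * X)) :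
  weight (map (fun p => (fst p, h (snd p))) l) = weight l.
Proof. unfold weight; induction l; simpl; auto. rewrite IHl; auto. Qed.

Lemma lc_app {X : Type} (F : X -> fn3) l1 l2 t x y :
  lc F (l1 ++ l2) t x y = lc F l1 t x y + lc F l2 t x y.
Proof. unfold lc; induction l1; simpl; try ring. rewrite IHl1; ring. Qed.

Lemma weight_app {X : Type} (l1 l2 : list (R * X)) : weight (l1 ++ l2) = weight l1 + weight l2.
Proof. unfold weight; induction l1; simpl; try ring. rewrite IHl1; ring. Qed.

Lemma weight_nonneg {X : Type} (l : list (R * X)) : 0 <= weight l.
Proof. unfold weight; induction l; simpl; try lra. pose proof (Rabs_pos (fst a)); lra. Qed.

Definition scale {X : Type} (c : R) (m : list (R * X)) : list (R * X) :=
  map (fun q => (c * fst q, snd q)) m.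

Lemma lc_scale {X : Type} (F : X -> fn3) c m t x y : lc F (scale c m) t x y = c * lc F m t x y.
Proof. unfold lc, scale; induction m; simpl; try ring. rewrite IHm; ring. Qed.

Lemma weight_scale {X : Type} c (m : list (R * X)) : weight (scale c m) = Rabs c * weight m.
Proof. unfold weight, scale; induction m; simpl; try ring. rewrite IHm, Rabs_mult; ring. Qed.

Lemma lc_flat {X Y : Type} (F : X -> fn3) (G : Y -> fn3) (g : X -> list (R * Y)) l t x y :
  (forall p, In p l -> F (snd p) t x y = lc G (g (snd p)) t x y) ->
  lc F l t x y = lc G (flat_map (fun p => scale (fst p) (g (snd p))) l) t x y.
Proof.
  induction l; simpl; intros H. reflexivity.
  rewrite lc_app, lc_scale, <- IHl by auto. rewrite <- H by auto. unfold lc; simpl; ring.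
Qed.

Lemma weight_flat {X Y : Type} (g : X -> list (R * Y)) l W :
  (forall p, In p l -> weight (g (snd p)) <= W) ->
  weight (flat_map (fun p => scale (fst p) (g (snd p))) l) <= weight l * W.
Proof.
  induction l; simpl; intros H. unfold weight; simpl; lra.
  rewrite weight_app, weight_scale.
  assert (h1 := H a (or_introl eq_refl)). assert (h2 : weight (flat_map (fun p => scale (fst p) (g (snd p))) l) <= weight l * W) by (apply IHl; auto).
  change (weight (a :: l)) with (Rabs (fst a) + weight l).
  pose proof (Rabs_pos (fst a)).
  assert (Rabs (fst a) * weight (g (snd a)) <= Rabs (fst a) * W) by (apply Rmult_le_compat_l; auto).
  lra.
Qed.

Lemma lc_bound {X : Type} (F : X -> fn3) l t x y c B :
  0 <= c -> (forall p, In p l -> c * Rabs (F (snd p) t x y) <= B) ->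
  c * Rabs (lc F l t x y) <= weight l * B.
Proof.
  intros Hc; induction l; simpl; intros H.
  - unfold lc, weight; simpl. rewrite Rabs_R0; lra.
  - change (lc F (a :: l) t x y) with (fst a * F (snd a) t x y + lc F l t x y).
    change (weight (a :: l)) with (Rabs (fst a) + weight l).
    assert (h1 := H a (or_introl eq_refl)). assert (h2 := IHl (fun p hp => H p (or_intror hp))).
    pose proof (Rabs_triang (fst a * F (snd a) t x y) (lc F l t x y)).
    rewrite Rabs_mult in H0. pose proof (Rabs_pos (fst a)).
    assert (c * (Rabs (fst a) * Rabs (F (snd a) t x y)) <= Rabs (fst a) * B).
    { replace (c * (Rabs (fst a) * Rabs (F (snd a) t x y))) with (Rabs (fst a) * (c * Rabs (F (snd a) t x y))) by ring.
      apply Rmult_le_compat_l; auto. }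
    assert (c * Rabs (fst a * F (snd a) t x y + lc F l t x y) <= c * (Rabs (fst a) * Rabs (F (snd a) t x y) + Rabs (lc F l t x y))) by (apply Rmult_le_compat_l; auto).
    lra.
Qed.


Definition cm (a : bdir) (b : dir) : option dir :=
  match a, b with
  | Defs.B1, Dt => Some Dx1 | Defs.B1, Dx1 => Some Dt | Defs.B1, Dx2 => None
  | Defs.B2, Dt => Some Dx2 | Defs.B2, Dx1 => None | Defs.B2, Dx2 => Some Dt
  end.
Definition cmf a b (w : fn3) : fn3 :=
  match cm a b with Some c => pd c w | None => cst3 0 end.

Lemma D1_crd U b : D1 U (crd b).
Proof. exact (proj1 (Sm_T0 U _ (Sm_crd U b))). Qed.

Lemma commP U a b w t x y : open3 U -> Sm U w -> U t x y ->
  pd b (boost a w) t x y = boost a (pd b w) t x y + cmf a b w t x y.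
Proof.
  intros HU Hw Hp. destruct (Sm_T0 U w Hw) as [h1 [h2 h3]].
  assert (S1 := h3 t x y Hp).
  destruct a.
  - change (boost Defs.B1 (pd b w) t x y) with (x * pd Dt (pd b w) t x y + t * pd Dx1 (pd b w) t x y).
    rewrite boost_eq.
    rewrite (pd_plus U b) by first [exact Hp | apply D1_mul; auto; apply D1_crd].
    unfold plus3. rewrite !(pd_mul U b) by first [exact Hp | auto; apply D1_crd].
    unfold plus3, mul3. rewrite !pd_crd. 
    destruct b; cbv beta iota delta [cmf cm cst3 crd];
    rewrite ?(S1 Dx1 Dt), ?(S1 Dx2 Dt), ?(S1 Dx2 Dx1); ring.
  - change (boost Defs.B2 (pd b w) t x y) with (y * pd Dt (pd b w) t x y + t * pd Dx2 (pd b w) t x y).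
    rewrite boost_eq.
    rewrite (pd_plus U b) by first [exact Hp | apply D1_mul; auto; apply D1_crd].
    unfold plus3. rewrite !(pd_mul U b) by first [exact Hp | auto; apply D1_crd].
    unfold plus3, mul3. rewrite !pd_crd. 
    destruct b; cbv beta iota delta [cmf cm cst3 crd];
    rewrite ?(S1 Dx1 Dt), ?(S1 Dx2 Dt), ?(S1 Dx2 Dx1); ring.
Qed.

Lemma D1_Sm U w : Sm U w -> D1 U w.
Proof. intro H; exact (proj1 (Sm_T0 U w H)). Qed.

Lemma Sm_cmf U a b w : Sm U w -> Sm U (cmf a b w).
Proof. intros H. unfold cmf. destruct (cm a b). apply (Sm_pd U); auto. intro n; apply (T_cst U). Qed.

Lemma commE U a b w : open3 U -> Sm U w ->
  EqU U (pd b (boost a w)) (plus3 (boost a (pd b w)) (cmf a b w)).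
Proof. intros HU Hw t x y Hp. apply (commP U); auto. Qed.

Lemma boost_plus U a f g t x y : D1 U f -> D1 U g -> U t x y ->
  boost a (plus3 f g) t x y = boost a f t x y + boost a g t x y.
Proof.
  intros. destruct a; cbv delta [boost] beta iota; rewrite !(pd_plus U) by auto; unfold plus3; ring.
Qed.

Lemma boost_scal a c f : boost a (scal3 c f) = scal3 c (boost a f).
Proof.
  apply functional_extensionality; intro t; apply functional_extensionality; intro x;
  apply functional_extensionality; intro y.
  destruct a; cbv delta [boost] beta iota; rewrite !pd_scal; unfold scal3; ring.
Qed.

Lemma box_eq w : box w = plus3 (plus3 (pd Dt (pd Dt w)) (scal3 (-1) (pd Dx1 (pd Dx1 w))))
                               (scal3 (-1) (pd Dx2 (pd Dx2 w))).
Proof.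
  apply functional_extensionality; intro t; apply functional_extensionality; intro x;
  apply functional_extensionality; intro y. unfold box, plus3, scal3. ring.
Qed.

Lemma D1_dd U w a b : Sm U w -> D1 U (pd a (pd b w)).
Proof. intros; apply D1_Sm; do 2 apply Sm_pd; auto. Qed.

Lemma pd_boxP U c w t x y : open3 U -> Sm U w -> U t x y ->
  pd c (box w) t x y = pd c (pd Dt (pd Dt w)) t x y - pd c (pd Dx1 (pd Dx1 w)) t x y
                        - pd c (pd Dx2 (pd Dx2 w)) t x y.
Proof.
  intros HU Hw Hp. rewrite box_eq.
  assert (d1 : D1 U (pd Dt (pd Dt w))) by (apply D1_dd; auto).
  assert (d2 : D1 U (scal3 (-1) (pd Dx1 (pd Dx1 w)))) by (apply D1_scal; apply D1_dd; auto).
  assert (d3 : D1 U (scal3 (-1) (pd Dx2 (pd Dx2 w)))) by (apply D1_scal; apply D1_dd; auto).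
  rewrite (pd_plus U c _ _ (D1_plus U _ _ d1 d2) d3 t x y Hp).
  unfold plus3 at 1. rewrite (pd_plus U c _ _ d1 d2 t x y Hp).
  rewrite !pd_scal. unfold plus3, scal3. ring.
Qed.

Lemma box_pd U c w : open3 U -> Sm U w -> EqU U (box (pd c w)) (pd c (box w)).
Proof.
  intros HU Hw t x y Hp. rewrite (pd_boxP U) by auto. unfold box.
  destruct (Sm_T0 U w Hw) as [h1 [h2 h3]].
  assert (E : forall b, pd b (pd b (pd c w)) t x y = pd c (pd b (pd b w)) t x y).
  { intro b. rewrite (pd_loc U b _ _ HU (fun t x y Hp => h3 t x y Hp b c)) by auto.
    destruct (Sm_T0 U (pd b w) (Sm_pd U b w Hw)) as [_ [_ h4]].
    apply h4; auto. }
  rewrite !E. reflexivity.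
Qed.

Lemma box_boost U a w : open3 U -> Sm U w -> EqU U (box (boost a w)) (boost a (box w)).
Proof.
  intros HU Hw t x y Hp. rewrite (box_eq w).
  assert (d1 : D1 U (pd Dt (pd Dt w))) by (apply D1_dd; auto).
  assert (d2 : D1 U (scal3 (-1) (pd Dx1 (pd Dx1 w)))) by (apply D1_scal; apply D1_dd; auto).
  assert (d3 : D1 U (scal3 (-1) (pd Dx2 (pd Dx2 w)))) by (apply D1_scal; apply D1_dd; auto).
  rewrite (boost_plus U a _ _ t x y (D1_plus U _ _ d1 d2) d3 Hp).
  rewrite (boost_plus U a _ _ t x y d1 d2 Hp).
  rewrite !boost_scal. unfold box, scal3.
  assert (E : forall b, pd b (pd b (boost a w)) t x y =
     boost a (pd b (pd b w)) t x y + cmf a b (pd b w) t x y + pd b (cmf a b w) t x y).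
  { intro b. rewrite (pd_loc U b _ _ HU (commE U a b w HU Hw)) by auto.
    assert (e1 : D1 U (boost a (pd b w))) by (apply D1_Sm; apply Sm_boost; auto; apply Sm_pd; auto).
    assert (e2 : D1 U (cmf a b w)) by (apply D1_Sm; apply Sm_cmf; auto).
    rewrite (pd_plus U b _ _ e1 e2 t x y Hp).
    unfold plus3. rewrite (commP U a b (pd b w) t x y HU (Sm_pd U b w Hw) Hp). ring. }
  rewrite !E.
  destruct (Sm_T0 U w Hw) as [h1 [h2 h3]]. assert (S1 := h3 t x y Hp).
  destruct a; cbv beta iota delta [cmf cm]; rewrite ?pd_cst; unfold cst3;
  rewrite ?(S1 Dx1 Dt), ?(S1 Dx2 Dt), ?(S1 Dx2 Dx1); ring.
Qed.

Lemma boost_loc U a f g : open3 U -> EqU U f g -> EqU U (boost a f) (boost a g).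
Proof.
  intros HU H t x y Hp. destruct a; cbv delta [boost] beta iota;
  rewrite !(pd_loc U _ f g HU H) by auto; reflexivity.
Qed.

Lemma vf_loc U z f g : open3 U -> EqU U f g -> EqU U (apply_vf z f) (apply_vf z g).
Proof. destruct z; simpl; intros. apply pd_loc; auto. apply boost_loc; auto. Qed.

Lemma applyZ_box U K w : open3 U -> Sm U w -> EqU U (applyZ K (box w)) (box (applyZ K w)).
Proof.
  intros HU Hw. induction K as [|z K IH]; simpl; intros t x y Hp. reflexivity.
  rewrite (vf_loc U z _ _ HU IH) by auto.
  assert (HS := Sm_applyZ U K w HU Hw).
  destruct z as [a|a]; simpl.
  - symmetry. apply (box_pd U a _ HU HS t x y Hp).
  - symmetry. apply (box_boost U a _ HU HS t x y Hp).
Qed.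


Definition Fw (v : fn3) (z : list vf * dir) : fn3 := applyZ (fst z) (pd (snd z) v).
Definition Rv (v : fn3) (z : list vf * dir) : fn3 := pd (snd z) (applyZ (fst z) v).
Definition good (K : list vf) (l : list (R * (list vf * dir))) : Prop :=
  forall p, In p l -> (length (fst (snd p)) <= length K)%nat /\ (nboost (fst (snd p)) <= nboost K)%nat.

Lemma nboost_Pd g K : nboost (Pd g :: K) = nboost K.
Proof. reflexivity. Qed.
Lemma nboost_Bst a K : nboost (Bst a :: K) = S (nboost K).
Proof. reflexivity. Qed.

Lemma pow2R_pos n : 0 < 2 ^ n.
Proof. apply pow_lt; lra. Qed.

Lemma weight_one (z : list vf * dir) : weight ((1, z) :: nil) = 1.
Proof. unfold weight; simpl. rewrite Rabs_R1; ring. Qed.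

Lemma exd_Sm U w t x y : Sm U w -> U t x y -> forall b, exd b w t x y.
Proof. intros H Hp b. apply (D1_Sm U w H t x y Hp). Qed.

Lemma good_map_Pd K g l : good K l ->
  good (Pd g :: K) (map (fun p => (fst p, (Pd g :: fst (snd p), snd (snd p)))) l).
Proof.
  intros H p Hp. apply in_map_iff in Hp. destruct Hp as [p0 [<- Hp0]].
  destruct (H p0 Hp0). simpl fst; simpl snd. rewrite !nboost_Pd. simpl length. lia.
Qed.

Lemma good_map_Bst K a l : good K l ->
  good (Bst a :: K) (map (fun p => (fst p, (Bst a :: fst (snd p), snd (snd p)))) l).
Proof.
  intros H p Hp. apply in_map_iff in Hp. destruct Hp as [p0 [<- Hp0]].
  destruct (H p0 Hp0). simpl fst; simpl snd. rewrite !nboost_Bst. simpl length. lia.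
Qed.

Lemma good_weak K z l : good K l -> good (z :: K) l.
Proof.
  intros H p Hp. destruct (H p Hp). destruct z; [rewrite nboost_Pd | rewrite nboost_Bst];
  simpl length; lia.
Qed.

Lemma good_app K l1 l2 : good K l1 -> good K l2 -> good K (l1 ++ l2).
Proof. intros h1 h2 p Hp. apply in_app_or in Hp. destruct Hp; auto. Qed.

Lemma fwd U v K : open3 U -> Sm U v -> forall b, exists l,
  weight l <= 2 ^ (length K) /\ good K l /\ EqU U (pd b (applyZ K v)) (lc (Fw v) l).
Proof.
  intros HU Hv. induction K as [|z K IH]; intros b.
  - exists ((1, (nil, b)) :: nil). split; [|split].
    + rewrite weight_one. simpl; lra.
    + intros p Hp. destruct Hp as [<-|[]]. simpl. lia.
    + intros t x y Hp. unfold lc, Fw; simpl. ring.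
  - assert (HW := Sm_applyZ U K v HU Hv).
    destruct z as [g|a].
    + destruct (IH b) as [l [hw [hg he]]].
      exists (map (fun p => (fst p, (Pd g :: fst (snd p), snd (snd p)))) l).
      split; [|split].
      * rewrite (weight_map (fun z => (Pd g :: fst z, snd z))). simpl length. simpl pow.
        pose proof (pow2R_pos (length K)). lra.
      * apply good_map_Pd; auto.
      * intros t x y Hp. change (applyZ (Pd g :: K) v) with (pd g (applyZ K v)).
        destruct (Sm_T0 U _ HW) as [_ [_ h3]].
        rewrite (h3 t x y Hp b g).
        rewrite (pd_loc U g _ _ HU he t x y Hp).
        rewrite pd_lc. 2:{ intros p _. apply exd_Sm with U; auto. apply Sm_applyZ; auto. apply Sm_pd; auto. }
        rewrite (lc_map (Fw v) (fun z => (Pd g :: fst z, snd z))). reflexivity.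
    + destruct (IH b) as [l1 [hw1 [hg1 he1]]].
      assert (Hc := commP U a b (applyZ K v)).
      destruct (cm a b) as [c|] eqn:Ec.
      * destruct (IH c) as [l2 [hw2 [hg2 he2]]].
        exists (map (fun p => (fst p, (Bst a :: fst (snd p), snd (snd p)))) l1 ++ l2).
        split; [|split].
        -- rewrite weight_app, (weight_map (fun z => (Bst a :: fst z, snd z))). simpl length. simpl pow. lra.
        -- apply good_app. apply good_map_Bst; auto. apply good_weak; auto.
        -- intros t x y Hp. change (applyZ (Bst a :: K) v) with (boost a (applyZ K v)).
           rewrite Hc by auto. unfold cmf. rewrite Ec. rewrite (he2 t x y Hp).
           rewrite (boost_loc U a _ _ HU he1 t x y Hp).
           rewrite boost_lc. 2:{ intros p _. apply exd_Sm with U; auto. apply Sm_applyZ; auto. apply Sm_pd; auto. }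
           rewrite lc_app. rewrite (lc_map (Fw v) (fun z => (Bst a :: fst z, snd z))). reflexivity.
      * exists (map (fun p => (fst p, (Bst a :: fst (snd p), snd (snd p)))) l1).
        split; [|split].
        -- rewrite (weight_map (fun z => (Bst a :: fst z, snd z))). simpl length. simpl pow.
           pose proof (pow2R_pos (length K)). lra.
        -- apply good_map_Bst; auto.
        -- intros t x y Hp. change (applyZ (Bst a :: K) v) with (boost a (applyZ K v)).
           rewrite Hc by auto. unfold cmf. rewrite Ec. unfold cst3.
           rewrite (boost_loc U a _ _ HU he1 t x y Hp).
           rewrite boost_lc. 2:{ intros p _. apply exd_Sm with U; auto. apply Sm_applyZ; auto. apply Sm_pd; auto. }
           rewrite (lc_map (Fw v) (fun z => (Bst a :: fst z, snd z))). rewrite Rplus_0_r. reflexivity.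
Qed.

Definition gR (a : bdir) (z : list vf * dir) : list (R * (list vf * dir)) :=
  (1, (Bst a :: fst z, snd z)) ::
  match cm a (snd z) with Some c => (-1, (fst z, c)) :: nil | None => nil end.

Lemma weight_gR a z : weight (gR a z) <= 2.
Proof.
  unfold gR, weight; destruct (cm a (snd z)); simpl; rewrite ?Rabs_R1, ?Rabs_m1; lra.
Qed.

Lemma revR U v K : open3 U -> Sm U v -> forall b, exists l,
  weight l <= 2 ^ (length K) /\ good K l /\ EqU U (applyZ K (pd b v)) (lc (Rv v) l).
Proof.
  intros HU Hv. induction K as [|z K IH]; intros b.
  - exists ((1, (nil, b)) :: nil). split; [|split].
    + rewrite weight_one. simpl; lra.
    + intros p Hp. destruct Hp as [<-|[]]. simpl. lia.
    + intros t x y Hp. unfold lc, Rv; simpl. ring.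
  - destruct (IH b) as [l [hw [hg he]]].
    destruct z as [g|a].
    + exists (map (fun p => (fst p, (Pd g :: fst (snd p), snd (snd p)))) l).
      split; [|split].
      * rewrite (weight_map (fun z => (Pd g :: fst z, snd z))). simpl length. simpl pow.
        pose proof (pow2R_pos (length K)). lra.
      * apply good_map_Pd; auto.
      * intros t x y Hp. change (applyZ (Pd g :: K) (pd b v)) with (pd g (applyZ K (pd b v))).
        rewrite (pd_loc U g _ _ HU he t x y Hp).
        rewrite pd_lc. 2:{ intros p _. apply exd_Sm with U; auto. apply Sm_pd; auto. apply Sm_applyZ; auto. }
        rewrite (lc_map (Rv v) (fun z => (Pd g :: fst z, snd z))).
        apply lc_ext. intros p _. unfold Rv. simpl fst. simpl snd.
        change (applyZ (Pd g :: fst (snd p)) v) with (pd g (applyZ (fst (snd p)) v)).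
        destruct (Sm_T0 U _ (Sm_applyZ U (fst (snd p)) v HU Hv)) as [_ [_ h3]].
        apply h3; auto.
    + exists (flat_map (fun p => scale (fst p) (gR a (snd p))) l).
      split; [|split].
      * eapply Rle_trans. apply weight_flat. intros p _. apply weight_gR.
        simpl length. simpl pow. pose proof (weight_nonneg l). lra.
      * intros p Hp. apply in_flat_map in Hp. destruct Hp as [p0 [Hp0 Hp]].
        destruct (hg p0 Hp0) as [h1 h2].
        unfold scale in Hp. apply in_map_iff in Hp. destruct Hp as [q [<- Hq]].
        unfold gR in Hq. simpl in Hq. destruct Hq as [<-|Hq].
        -- simpl fst; simpl snd. rewrite !nboost_Bst. simpl length. lia.
        -- destruct (cm a (snd (snd p0))); simpl in Hq; [destruct Hq as [<-|[]]|destruct Hq].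
           simpl fst; simpl snd. rewrite nboost_Bst. simpl length. lia.
      * intros t x y Hp. change (applyZ (Bst a :: K) (pd b v)) with (boost a (applyZ K (pd b v))).
        rewrite (boost_loc U a _ _ HU he t x y Hp).
        rewrite boost_lc. 2:{ intros p _. apply exd_Sm with U; auto. apply Sm_pd; auto. apply Sm_applyZ; auto. }
        apply lc_flat. intros p _. unfold Rv.
        assert (HZ := Sm_applyZ U (fst (snd p)) v HU Hv).
        pose proof (commP U a (snd (snd p)) _ t x y HU HZ Hp) as Hc.
        unfold gR, cmf in *. destruct (cm a (snd (snd p))).
        -- unfold lc. cbv beta iota delta [fold_right]. cbn [fst snd].
           change (applyZ (Bst a :: fst (snd p)) v) with (boost a (applyZ (fst (snd p)) v)).
           rewrite Hc. ring.
        -- unfold lc. cbv beta iota delta [fold_right]. cbn [fst snd].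
           change (applyZ (Bst a :: fst (snd p)) v) with (boost a (applyZ (fst (snd p)) v)).
           rewrite Hc. unfold cst3. ring.
Qed.


Lemma maxR_nonneg l : 0 <= maxR l.
Proof. induction l; simpl. lra. eapply Rle_trans; [exact IHl|apply Rmax_r]. Qed.

Lemma maxR_ge l e : In e l -> e <= maxR l.
Proof.
  induction l; simpl; intros H. destruct H.
  destruct H as [<-|H]. apply Rmax_l. eapply Rle_trans; [apply IHl; auto|apply Rmax_r].
Qed.

Lemma maxR_scale_le l c B : 0 <= c -> 0 <= B -> (forall e, In e l -> c * e <= B) -> c * maxR l <= B.
Proof.
  intros Hc HB; induction l; simpl; intros H. lra.
  unfold Rmax. destruct (Rle_dec a (maxR l)).
  apply IHl; auto. apply H; auto.
Qed.

Lemma in_all_vf z : In z all_vf.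
Proof. destruct z as [[]|[]]; simpl; tauto. Qed.

Lemma in_all_dir a : In a all_dir.
Proof. destruct a; simpl; tauto. Qed.

Lemma words_complete K : In K (words (length K)).
Proof.
  induction K as [|z K IH]. simpl; auto.
  change (In (z :: K) (flat_map (fun K0 => map (fun z0 => z0 :: K0) all_vf) (words (length K)))).
  apply in_flat_map. exists K. split; auto. apply (in_map (fun z0 => z0 :: K)). apply in_all_vf.
Qed.

Lemma words_length n K : In K (words n) -> length K = n.
Proof.
  revert K; induction n; intros K H.
  simpl in H; destruct H as [<-|[]]; auto.
  change (In K (flat_map (fun K0 => map (fun z0 => z0 :: K0) all_vf) (words n))) in H.
  apply in_flat_map in H. destruct H as [K0 [H1 H2]]. apply in_map_iff in H2.
  destruct H2 as [z [<- _]]. simpl. rewrite (IHn K0); auto.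
Qed.

Lemma in_admissible p k K : (length K <= p)%nat -> (nboost K <= k)%nat -> In K (admissible p k).
Proof.
  intros h1 h2. unfold admissible. apply filter_In. split.
  apply in_flat_map. exists (length K). split. apply in_seq. lia. apply words_complete.
  apply Nat.leb_le; auto.
Qed.

Lemma admissible_inv p k K : In K (admissible p k) -> (length K <= p)%nat /\ (nboost K <= k)%nat.
Proof.
  unfold admissible. intros H. apply filter_In in H. destruct H as [H1 H2].
  apply Nat.leb_le in H2. apply in_flat_map in H1. destruct H1 as [n [Hn Hw]].
  apply in_seq in Hn. apply words_length in Hw. lia.
Qed.

Lemma len_split K : length K = (nboost K + nder K)%nat.
Proof.
  induction K as [|z K IH]; simpl. auto. destruct z; unfold nboost, nder in *; simpl; lia.
Qed.

Lemma norm_pk_ge p k w t x y K : (length K <= p)%nat -> (nboost K <= k)%nat ->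
  Rabs (applyZ K w t x y) <= norm_pk p k w t x y.
Proof.
  intros. unfold norm_pk. apply maxR_ge. apply in_map_iff. exists K. split; auto.
  apply in_admissible; auto.
Qed.

Lemma norm_d_ge p k w t x y K b : (length K <= p)%nat -> (nboost K <= k)%nat ->
  Rabs (applyZ K (pd b w) t x y) <= norm_d_pk p k w t x y.
Proof.
  intros. eapply Rle_trans. apply norm_pk_ge; eauto.
  unfold norm_d_pk. apply maxR_ge. apply in_map_iff. exists b. split; auto. apply in_all_dir.
Qed.


Lemma tri_a a u v : Rabs a <= 1 -> Rabs (u - a * v) <= Rabs u + Rabs v.
Proof.
  intros. unfold Rminus. eapply Rle_trans. apply Rabs_triang. rewrite Rabs_Ropp, Rabs_mult.
  assert (Rabs a * Rabs v <= 1 * Rabs v) by (apply Rmult_le_compat_r; [apply Rabs_pos|auto]). lra.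
Qed.

Lemma sig_b s l m : 0 <= s <= 1 -> Rabs l <= m -> Rabs (s * l) <= m.
Proof.
  intros Hs Hl. rewrite Rabs_mult, (Rabs_pos_eq s) by lra.
  assert (s * Rabs l <= 1 * Rabs l) by (apply Rmult_le_compat_r; [apply Rabs_pos|lra]). lra.
Qed.

Lemma divb z M t : 0 < t -> Rabs z <= M -> Rabs (z / t) <= M / t.
Proof.
  intros Ht Hz. unfold Rdiv. rewrite Rabs_mult, (Rabs_pos_eq (/ t)) by (left; apply Rinv_0_lt_compat; auto).
  apply Rmult_le_compat_r; auto. left; apply Rinv_0_lt_compat; auto.
Qed.

Lemma core_alg t x y T P Q A B C M :
  0 < t -> x^2 + y^2 <= t^2 ->
  Rabs (x*T + t*P) <= M -> Rabs (x*P + t*A) <= M -> Rabs (x*Q + t*B) <= M ->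
  Rabs (y*T + t*Q) <= M -> Rabs (y*P + t*B) <= M -> Rabs (y*Q + t*C) <= M ->
  let s := (t^2 - x^2 - y^2) / t^2 in
  let Bx := T - A - C in
  s * Rabs T <= Rabs Bx + 6 * M / t /\ s * Rabs P <= Rabs Bx + 6 * M / t /\
  s * Rabs Q <= Rabs Bx + 6 * M / t /\ s * Rabs A <= Rabs Bx + 6 * M / t /\
  s * Rabs B <= Rabs Bx + 6 * M / t /\ s * Rabs C <= Rabs Bx + 6 * M / t.
Proof.
  intros Ht Hr h1 h2 h3 h4 h5 h6 s Bx.
  set (a := x / t). set (b := y / t). set (m := M / t).
  assert (Hs : s = 1 - a^2 - b^2) by (unfold s, a, b; field; lra).
  assert (Hab : a^2 + b^2 <= 1).
  { unfold a, b. replace ((x/t)^2 + (y/t)^2) with ((x^2+y^2) * / t^2) by (field; lra).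
    replace 1 with (t^2 * / t^2) by (field; lra). apply Rmult_le_compat_r; auto.
    left; apply Rinv_0_lt_compat; nra. }
  assert (Ha : Rabs a <= 1) by (apply Rabs_le; nra).
  assert (Hb : Rabs b <= 1) by (apply Rabs_le; nra).
  assert (Hs01 : 0 <= s <= 1) by (rewrite Hs; nra).
  assert (l1t : Rabs (P + a * T) <= m).
  { replace (P + a * T) with ((x*T + t*P)/t) by (unfold a; field; lra). apply divb; auto. }
  assert (l11 : Rabs (A + a * P) <= m).
  { replace (A + a * P) with ((x*P + t*A)/t) by (unfold a; field; lra). apply divb; auto. }
  assert (l12 : Rabs (B + a * Q) <= m).
  { replace (B + a * Q) with ((x*Q + t*B)/t) by (unfold a; field; lra). apply divb; auto. }
  assert (l2t : Rabs (Q + b * T) <= m).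
  { replace (Q + b * T) with ((y*T + t*Q)/t) by (unfold b; field; lra). apply divb; auto. }
  assert (l21 : Rabs (B + b * P) <= m).
  { replace (B + b * P) with ((y*P + t*B)/t) by (unfold b; field; lra). apply divb; auto. }
  assert (l22 : Rabs (C + b * Q) <= m).
  { replace (C + b * Q) with ((y*Q + t*C)/t) by (unfold b; field; lra). apply divb; auto. }
  assert (E6 : 6 * M / t = 6 * m) by (unfold m; field; lra).
  rewrite E6.
  assert (hT : Rabs (s * T) <= Rabs Bx + 4 * m).
  { replace (s * T) with (((Bx + (A + a*P)) + (C + b*Q)) - a * (P + a*T) - b * (Q + b*T))
      by (rewrite Hs; unfold Bx; ring).
    eapply Rle_trans. apply tri_a; auto.
    eapply Rle_trans. apply Rplus_le_compat_r. apply tri_a; auto.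
    pose proof (Rabs_triang (Bx + (A + a*P)) (C + b*Q)).
    pose proof (Rabs_triang Bx (A + a*P)). lra. }
  assert (hP : Rabs (s * P) <= Rabs Bx + 5 * m).
  { replace (s * P) with (s * (P + a*T) - a * (s * T)) by ring.
    eapply Rle_trans. apply tri_a; auto. pose proof (sig_b s _ _ Hs01 l1t). lra. }
  assert (hQ : Rabs (s * Q) <= Rabs Bx + 5 * m).
  { replace (s * Q) with (s * (Q + b*T) - b * (s * T)) by ring.
    eapply Rle_trans. apply tri_a; auto. pose proof (sig_b s _ _ Hs01 l2t). lra. }
  assert (hA : Rabs (s * A) <= Rabs Bx + 6 * m).
  { replace (s * A) with (s * (A + a*P) - a * (s * P)) by ring.
    eapply Rle_trans. apply tri_a; auto. pose proof (sig_b s _ _ Hs01 l11). lra. }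
  assert (hB : Rabs (s * B) <= Rabs Bx + 6 * m).
  { replace (s * B) with (s * (B + a*Q) - a * (s * Q)) by ring.
    eapply Rle_trans. apply tri_a; auto. pose proof (sig_b s _ _ Hs01 l12). lra. }
  assert (hC : Rabs (s * C) <= Rabs Bx + 6 * m).
  { replace (s * C) with (s * (C + b*Q) - b * (s * Q)) by ring.
    eapply Rle_trans. apply tri_a; auto. pose proof (sig_b s _ _ Hs01 l22). lra. }
  assert (m0 : 0 <= m) by (pose proof (Rabs_pos (P + a*T)); lra).
  rewrite !Rabs_mult, (Rabs_pos_eq s) in * by lra.
  repeat split; lra.
Qed.


Lemma core_pt U w t x y M : open3 U -> Sm U w -> U t x y -> 0 < t -> x^2 + y^2 <= t^2 ->
  (forall a b, Rabs (boost a (pd b w) t x y) <= M) ->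
  forall a b, ((t^2 - x^2 - y^2) / t^2) * Rabs (pd a (pd b w) t x y) <= Rabs (box w t x y) + 6 * M / t.
Proof.
  intros HU Hw Hp Ht Hr HM.
  destruct (Sm_T0 U w Hw) as [_ [_ h3]]. assert (S1 := h3 t x y Hp).
  assert (k1 := HM Defs.B1 Dt). assert (k2 := HM Defs.B1 Dx1). assert (k3 := HM Defs.B1 Dx2).
  assert (k4 := HM Defs.B2 Dt). assert (k5 := HM Defs.B2 Dx1). assert (k6 := HM Defs.B2 Dx2).
  cbv delta [boost] beta iota in k1, k2, k3, k4, k5, k6.
  rewrite (S1 Dx1 Dt) in k1. rewrite (S1 Dx2 Dt) in k4. rewrite (S1 Dx2 Dx1) in k5.
  destruct (core_alg t x y (pd Dt (pd Dt w) t x y) (pd Dt (pd Dx1 w) t x y) (pd Dt (pd Dx2 w) t x y)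
    (pd Dx1 (pd Dx1 w) t x y) (pd Dx1 (pd Dx2 w) t x y) (pd Dx2 (pd Dx2 w) t x y) M Ht Hr
    k1 k2 k3 k4 k5 k6) as [c1 [c2 [c3 [c4 [c5 c6]]]]].
  change (box w t x y) with (pd Dt (pd Dt w) t x y - pd Dx1 (pd Dx1 w) t x y - pd Dx2 (pd Dx2 w) t x y).
  intros a b; destruct a, b; auto.
  rewrite (S1 Dx1 Dt); auto. rewrite (S1 Dx2 Dt); auto. rewrite (S1 Dx2 Dx1); auto.
Qed.

Lemma pow2_mono n m : (n <= m)%nat -> 2 ^ n <= 2 ^ m.
Proof. intros; apply Rle_pow; auto; lra. Qed.

Lemma M_bound U u p k K t x y : open3 U -> Sm U u -> U t x y ->
  (length K <= p)%nat -> (nboost K <= k)%nat ->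
  forall a b, Rabs (boost a (pd b (applyZ K u)) t x y) <= 3 * 2 ^ p * norm_d_pk (p + 1) (k + 1) u t x y.
Proof.
  intros HU Hu Hp hl hb a b.
  set (N := norm_d_pk (p + 1) (k + 1) u t x y).
  assert (N0 : 0 <= N) by apply maxR_nonneg.
  assert (HW := Sm_applyZ U K u HU Hu).
  assert (Hc := commP U a b (applyZ K u) t x y HU HW Hp).
  destruct (fwd U u (Bst a :: K) HU Hu b) as [l1 [hw1 [hg1 he1]]].
  change (applyZ (Bst a :: K) u) with (boost a (applyZ K u)) in he1.
  rewrite (he1 t x y Hp) in Hc.
  assert (B1 : 1 * Rabs (lc (Fw u) l1 t x y) <= weight l1 * N).
  { apply lc_bound. lra. intros z Hz. destruct (hg1 z Hz) as [z1 z2].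
    rewrite Rmult_1_l. apply norm_d_ge. simpl length in z1. lia. rewrite nboost_Bst in z2. lia. }
  assert (W1 : weight l1 * N <= 2 * 2 ^ p * N).
  { apply Rmult_le_compat_r; auto. eapply Rle_trans. apply hw1. simpl length.
    change (2 ^ S (length K)) with (2 * 2 ^ length K).
    pose proof (pow2_mono _ _ hl). lra. }
  assert (Hcm : Rabs (cmf a b (applyZ K u) t x y) <= 2 ^ p * N).
  { unfold cmf. destruct (cm a b) as [c|].
    - destruct (fwd U u K HU Hu c) as [l2 [hw2 [hg2 he2]]].
      rewrite (he2 t x y Hp).
      assert (1 * Rabs (lc (Fw u) l2 t x y) <= weight l2 * N).
      { apply lc_bound. lra. intros z Hz. destruct (hg2 z Hz) as [z1 z2].
        rewrite Rmult_1_l. apply norm_d_ge; lia. }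
      assert (weight l2 * N <= 2 ^ p * N).
      { apply Rmult_le_compat_r; auto. eapply Rle_trans. apply hw2. apply pow2_mono; auto. }
      lra.
    - unfold cst3. rewrite Rabs_R0. apply Rmult_le_pos; auto. left; apply pow2R_pos. }
  assert (E : boost a (pd b (applyZ K u)) t x y = lc (Fw u) l1 t x y - cmf a b (applyZ K u) t x y) by lra.
  rewrite E. unfold Rminus. eapply Rle_trans. apply Rabs_triang. rewrite Rabs_Ropp. lra.
Qed.

Lemma inK_facts s0 s1 t x y : inK s0 s1 t x y -> 1 < t /\ x^2 + y^2 <= t^2.
Proof.
  intros [h1 _]. unfold rad in h1. pose proof (sqrt_pos (x^2+y^2)).
  assert (sqrt (x^2+y^2) * sqrt (x^2+y^2) = x^2+y^2) by (apply sqrt_sqrt; nra).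
  split. lra. nra.
Qed.

Lemma sig_eq t x y : 0 < t -> x^2 + y^2 <= t^2 -> (hyp_s t x y / t) ^ 2 = (t^2 - x^2 - y^2) / t^2.
Proof.
  intros. unfold hyp_s.
  replace ((sqrt (t ^ 2 - x ^ 2 - y ^ 2) / t) ^ 2) with
    (sqrt (t ^ 2 - x ^ 2 - y ^ 2) * sqrt (t ^ 2 - x ^ 2 - y ^ 2) / t ^ 2) by (field; lra).
  rewrite sqrt_sqrt by lra. reflexivity.
Qed.

Lemma core_K s0 s1 U u p k K t x y : open3 U -> Sm U u -> U t x y -> inK s0 s1 t x y ->
  (length K <= p)%nat -> (nboost K <= k)%nat ->
  forall a b, (hyp_s t x y / t) ^ 2 * Rabs (pd a (pd b (applyZ K u)) t x y) <=
    norm_pk p k (box u) t x y + 18 * 2 ^ p * / t * norm_d_pk (p + 1) (k + 1) u t x y.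
Proof.
  intros HU Hu Hp Hin hl hb a b.
  destruct (inK_facts _ _ _ _ _ Hin) as [Ht Hr].
  rewrite sig_eq by (auto; lra).
  eapply Rle_trans. apply (core_pt U (applyZ K u) t x y (3 * 2 ^ p * norm_d_pk (p + 1) (k + 1) u t x y));
    [exact HU | apply Sm_applyZ; auto | exact Hp | lra | exact Hr | intros; apply (M_bound U); auto].
  rewrite <- (applyZ_box U K u HU Hu t x y Hp).
  assert (Rabs (applyZ K (box u) t x y) <= norm_pk p k (box u) t x y) by (apply norm_pk_ge; auto).
  assert (E : 6 * (3 * 2 ^ p * norm_d_pk (p + 1) (k + 1) u t x y) / t =
              18 * 2 ^ p * / t * norm_d_pk (p + 1) (k + 1) u t x y) by (field; lra).
  rewrite E. lra.
Qed.


Theorem lemma7p1 :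
  forall p : nat, exists C : R, 0 < C /\
  forall (s0 s1 : R) (U : R -> R -> R -> Prop) (u : fn3),
    open3 U ->
    (forall t x y, inK s0 s1 t x y -> U t x y) ->
    smooth_on U u ->
    forall (k : nat) (K : list vf),
      (k <= p)%nat -> nboost K = k -> nder K = (p - k)%nat ->
      forall t x y, inK s0 s1 t x y ->
        (forall a b : dir,
           (hyp_s t x y / t) ^ 2 * Rabs (pd a (pd b (applyZ K u)) t x y)
           <= C * norm_pk p k (box u) t x y
              + C * / t * norm_d_pk (p + 1) (k + 1) u t x y) /\
        (hyp_s t x y / t) ^ 2 * norm_dd_pk p k u t x y
           <= C * norm_pk p k (box u) t x y
              + C * / t * norm_d_pk (p + 1) (k + 1) u t x y.
Proof.
  intros p. set (q := 2 ^ p). assert (q1 : 1 <= q) by (unfold q; apply pow_R1_Rle; lra).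
  exists (q * q * (1 + 18 * q)). split. { assert (0 < q * q) by nra. nra. }
  intros s0 s1 U u HU HK Hs k K hk hb hd t x y Hin.
  assert (Hp : U t x y) by auto.
  assert (Hu : Sm U u) by (apply Sm_smooth; auto).
  destruct (inK_facts _ _ _ _ _ Hin) as [Ht Hr].
  set (Pn := norm_pk p k (box u) t x y). set (N := norm_d_pk (p + 1) (k + 1) u t x y).
  assert (P0 : 0 <= Pn) by apply maxR_nonneg. assert (N0 : 0 <= N) by apply maxR_nonneg.
  set (Bd := Pn + 18 * q * / t * N).
  assert (it : 0 < / t) by (apply Rinv_0_lt_compat; lra).
  assert (B0 : 0 <= Bd) by (unfold Bd; assert (0 <= 18 * q * / t * N) by
     (repeat apply Rmult_le_pos; lra); lra).
  assert (Key : q * q * Bd <= q * q * (1 + 18 * q) * Pn + q * q * (1 + 18 * q) * / t * N).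
  { unfold Bd. assert (0 <= q * q * (18 * q * Pn + / t * N)).
    { apply Rmult_le_pos. nra. assert (0 <= / t * N) by (apply Rmult_le_pos; lra).
      assert (0 <= 18 * q * Pn) by (apply Rmult_le_pos; nra). lra. }
    nra. }
  assert (Key1 : Bd <= q * q * Bd).
  { assert (1 <= q * q) by nra. rewrite <- (Rmult_1_l Bd) at 1. apply Rmult_le_compat_r; auto. }
  assert (core : forall K0, (length K0 <= p)%nat -> (nboost K0 <= k)%nat -> forall a b,
    (hyp_s t x y / t) ^ 2 * Rabs (pd a (pd b (applyZ K0 u)) t x y) <= Bd).
  { intros K0 h1 h2 a b. apply (core_K s0 s1 U u p k K0 t x y); auto. }
  assert (sig0 : 0 <= (hyp_s t x y / t) ^ 2) by (apply pow2_ge_0).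
  split.
  - intros a b. eapply Rle_trans. apply core.
    rewrite len_split. lia. lia. lra.
  - unfold norm_dd_pk. apply maxR_scale_le; auto. nra.
    intros e He. apply in_flat_map in He. destruct He as [a [_ He]].
    apply in_map_iff in He. destruct He as [b [<- _]].
    unfold norm_pk. apply maxR_scale_le; auto. nra.
    intros e He. apply in_map_iff in He. destruct He as [K1 [<- HK1]].
    apply admissible_inv in HK1. destruct HK1 as [l1K l1b].
    destruct (revR U (pd b u) K1 HU (Sm_pd U b u Hu) a) as [l1 [hw1 [hg1 he1]]].
    rewrite (he1 t x y Hp).
    eapply Rle_trans. apply (lc_bound _ _ _ _ _ _ (q * Bd) sig0).
    + intros z Hz. destruct (hg1 z Hz) as [z1 z2]. unfold Rv.
      destruct (revR U u (fst (snd z)) HU Hu b) as [l2 [hw2 [hg2 he2]]].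
      rewrite (pd_loc U _ _ _ HU he2 t x y Hp).
      rewrite pd_lc. 2:{ intros r _. apply exd_Sm with U; auto. unfold Rv. apply Sm_pd. apply Sm_applyZ; auto. }
      eapply Rle_trans. apply (lc_bound _ _ _ _ _ _ Bd sig0).
      * intros r Hr2. destruct (hg2 r Hr2) as [r1 r2]. unfold Rv. apply core; lia.
      * apply Rmult_le_compat_r; auto. eapply Rle_trans. apply hw2. unfold q. apply pow2_mono. lia.
    + assert (weight l1 <= q) by (eapply Rle_trans; [apply hw1|unfold q; apply pow2_mono; lia]).
      assert (weight l1 * (q * Bd) <= q * (q * Bd)) by (apply Rmult_le_compat_r; nra).
      nra.
Qed.
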